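(* Let $\tau>0$ and let $f\in C(\mathbb R\times\mathbb R,\mathbb R)$ satisfy: (1) $f$ is asymptotically $\tau$-periodic in time; (2) $f$ is positively regular; (3) for some $u_0\in\mathbb R$ the solution $\varphi(t,u_0,f)$ of $x'=f(t,x)$, $x(0)=u_0$, is bounded on $\mathbb R_+=[0,\infty)$. Then $\varphi(t,u_0,f)$ is $S$-asymptotically $\tau$-periodic, i.e. $\lim_{t\to+\infty}|\varphi(t+\tau,u_0,f)-\varphi(t,u_0,f)|=0$.
   Context: $C(\mathbb R\times\mathbb R,\mathbb R)$ is the space of continuous functions $\mathbb R\times\mathbb R\to\mathbb R$ with the compact-open topology (uniform convergence on compact sets). For $h\in\mathbb R$, $f^h(t,x):=f(t+h,x)$. $H^+(f)$ denotes the closure in $C(\mathbb R\times\mathbb R,\mathbb R)$ of $\{f^h:\ h\ge 0\}$. $f$ is called positively regular if for every $g\in H^+(f)$ and every $v\in\mathbb R$ the equation $y'=g(t,y)$ has a unique solution $\varphi(t,v,g)$ with $\varphi(0,v,g)=v$, and it is defined on all of $\mathbb R_+$. $f$ is called asymptotically $\tau$-periodic in time if $f=P+R$ with $P,R\in C(\mathbb R\times\mathbb R,\mathbb R)$, $P(t+\tau,x)=P(t,x)$ for all $(t,x)$, and $\lim_{t\to+\infty}R(t,x)=0$ uniformly in $x$ on every compact subset of $\mathbb R$. *)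

(* Defs.v *)
From Stdlib Require Import Reals.
From Coquelicot Require Import Coquelicot.
Open Scope R_scope.

Definition cont2 (f : R -> R -> R) : Prop :=
  forall t x, continuous (fun p : R * R => f (fst p) (snd p)) (t, x).

(* Membership in H^+(f): closure of {f^h : h >= 0} in C(RxR,R) with the
   compact-open topology (= uniform convergence on compacta).  Every compact
   subset of R x R lies in a square [-r,r]^2, so a basic neighbourhood of g is
   {k : sup_{[-r,r]^2} |k - g| < eps}. *)
Definition in_Hplus (f g : R -> R -> R) : Prop :=
  cont2 g /\
  forall r eps, 0 < eps -> exists h, 0 <= h /\
    forall t x, Rabs t <= r -> Rabs x <= r -> Rabs (f (t + h) x - g t x) < eps.

Definition solution_on (g : R -> R -> R) (v T : R) (phi : R -> R) : Prop :=
  phi 0 = v /\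
  filterlim phi (at_right 0) (locally (phi 0)) /\
  forall t, 0 < t < T -> is_derive phi t (g t (phi t)).

Definition solution_Rplus (g : R -> R -> R) (v : R) (phi : R -> R) : Prop :=
  forall T, 0 < T -> solution_on g v T phi.

Definition positively_regular (f : R -> R -> R) : Prop :=
  forall g, in_Hplus f g -> forall v, exists phi,
    solution_Rplus g v phi /\
    forall T psi, 0 < T -> solution_on g v T psi ->
      forall t, 0 <= t < T -> psi t = phi t.

Definition asymp_periodic (tau : R) (f : R -> R -> R) : Prop :=
  exists P Q : R -> R -> R,
    cont2 P /\ cont2 Q /\
    (forall t x, f t x = P t x + Q t x) /\
    (forall t x, P (t + tau) x = P t x) /\
    (forall r eps, 0 < eps -> exists T0, forall t x,
        T0 <= t -> Rabs x <= r -> Rabs (Q t x) < eps).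

(* Main.v *)
Require Import Defs.
From Stdlib Require Import Reals Lra Lia ZArith ClassicalEpsilon.
From Coquelicot Require Import Coquelicot.
From mathcomp Require classical_sets filter.
Open Scope R_scope.

Record UF (I : Type) := mkUF {
  Uf : (I -> Prop) -> Prop;
  U_true : Uf (fun _ => True);
  U_and : forall A B, Uf A -> Uf B -> Uf (fun i => A i /\ B i);
  U_mono : forall A B : I -> Prop, (forall i, A i -> B i) -> Uf A -> Uf B;
  U_ne : forall A, Uf A -> exists i, A i;
  U_ult : forall A, Uf A \/ Uf (fun i => ~ A i) }.
Arguments Uf {I} u A.

Lemma UF_exists (I : Type) (B : nat -> I -> Prop) :
  (forall n, exists i, B n i) -> (forall n i, B (S n) i -> B n i) ->
  exists u : UF I, forall n, Uf u (B n).
Proof.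
  intros Hne Hdec.
  assert (Hle : forall n m, (n <= m)%nat -> forall i, B m i -> B n i).
  { intros n m Hnm. induction Hnm; auto. }
  set (F := fun A : I -> Prop => exists n, forall i, B n i -> A i).
  assert (PF : mathcomp.classical.filter.ProperFilter F).
  { constructor.
    - intros [n Hn]. destruct (Hne n) as [i Hi]. exact (Hn i Hi).
    - constructor.
      + exists 0%nat. intros; exact Logic.I.
      + intros A C [n Hn] [m Hm]. exists (max n m). intros i Hi. split.
        * apply Hn. apply (Hle n (max n m)); auto. apply Nat.le_max_l.
        * apply Hm. apply (Hle m (max n m)); auto. apply Nat.le_max_r.
      + intros A C HAC [n Hn]. exists n. intros i Hi. apply HAC. apply Hn. exact Hi. }
  destruct (mathcomp.classical.filter.ultraFilterLemma PF) as [G [GU FG]].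
  pose proof (@mathcomp.classical.filter.ultra_proper _ G GU) as GP. destruct GP as [Gne [GT GI GS]].
  unshelve eexists (mkUF I G _ _ _ _ _).
  - exact GT.
  - intros A C HA HC. exact (GI A C HA HC).
  - intros A C HAC HA. exact (GS A C HAC HA).
  - intros A HA. apply Classical_Prop.NNPP. intros Hno. apply Gne.
    apply (GS A); auto. intros t At. apply Hno. exists t. exact At.
  - intros A. destruct (mathcomp.classical.filter.in_ultra_setVsetC A GU); auto.
  - intros n. apply FG. exists n. auto.
Qed.

Section UFl.
Context {I : Type} (u : UF I).

Lemma U_nf : ~ Uf u (fun _ => False).
Proof. intros H. destruct (U_ne I u _ H) as [i Hi]. exact Hi. Qed.

Lemma U_and3 A B C : Uf u A -> Uf u B -> Uf u C -> Uf u (fun i => A i /\ B i /\ C i).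
Proof. intros. apply U_and; auto. apply U_and; auto. Qed.

Lemma U_imp (A B : I -> Prop) : Uf u A -> Uf u (fun i => A i -> B i) -> Uf u B.
Proof. intros HA HI. apply (U_mono I u (fun i => A i /\ (A i -> B i))). intros i [H1 H2]; auto. apply U_and; auto. Qed.

Lemma U_contra (A : I -> Prop) : Uf u A -> (forall i, ~ A i) -> False.
Proof. intros H H'. destruct (U_ne I u _ H) as [i Hi]. exact (H' i Hi). Qed.

Definition ulim (F : I -> R) (L : R) := forall e, 0 < e -> Uf u (fun i => Rabs (F i - L) < e).

Lemma UF_lim (F : I -> R) C : Uf u (fun i => Rabs (F i) <= C) ->
  exists L, Rabs L <= C /\ ulim F L.
Proof.
  intros HC.
  set (E := fun y => Uf u (fun i => y <= F i)).
  assert (EB : bound E).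
  { exists C. intros y Ey. destruct (Rle_dec y C) as [?|Hn]; auto. exfalso.
    apply (U_contra _ (U_and I u _ _ Ey HC)). intros i [H1 H2].
    apply Rabs_le_between in H2. lra. }
  assert (E0 : exists y, E y).
  { exists (- C). apply (U_mono I u _ _ (fun i H => proj1 (proj1 (Rabs_le_between _ _) H)) HC). }
  destruct (completeness E EB E0) as [L [HL1 HL2]].
  exists L. split.
  - apply Rabs_le_between. split.
    + apply HL1. apply (U_mono I u _ _ (fun i H => proj1 (proj1 (Rabs_le_between _ _) H)) HC).
    + apply HL2. intros y Ey. destruct (Rle_dec y C) as [?|Hn]; auto. exfalso.
      apply (U_contra _ (U_and I u _ _ Ey HC)). intros i [H1 H2].
      apply Rabs_le_between in H2. lra.
  - intros e He.
    assert (A1 : Uf u (fun i => L - e < F i)).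
    { destruct (Classical_Prop.classic (exists y, E y /\ L - e < y)) as [[y [Ey Hy]]|Hn].
      - apply (U_mono I u _ _ (fun i H => Rlt_le_trans _ _ _ Hy H) Ey).
      - exfalso. assert (L <= L - e); [|lra]. apply HL2. intros y Ey.
        destruct (Rle_dec y (L - e)); auto. exfalso. apply Hn. exists y. split; auto. lra. }
    assert (A2 : Uf u (fun i => F i < L + e)).
    { destruct (U_ult I u (fun i => L + e / 2 <= F i)) as [H|H].
      - exfalso. assert (L + e/2 <= L) by (apply HL1; exact H). lra.
      - apply (U_mono I u (fun i => ~ (L + e / 2 <= F i))); [intros i Hi; lra|exact H]. }
    apply (U_mono I u (fun i => L - e < F i /\ F i < L + e)); [intros i [Hi1 Hi2]; apply Rabs_def1; lra|apply U_and; auto].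
Qed.

Lemma ulim_unique F L1 L2 : ulim F L1 -> ulim F L2 -> L1 = L2.
Proof.
  intros H1 H2. destruct (Req_dec L1 L2) as [?|Hn]; auto. exfalso.
  assert (He : 0 < Rabs (L1 - L2) / 2).
  { apply Rdiv_lt_0_compat; [apply Rabs_pos_lt; lra|lra]. }
  apply (U_contra _ (U_and I u _ _ (H1 _ He) (H2 _ He))). intros i [A B].
  assert (Rabs (L1 - L2) <= Rabs (F i - L1) + Rabs (F i - L2)).
  { replace (L1 - L2) with (-(F i - L1) + (F i - L2)) by ring.
    eapply Rle_trans; [apply Rabs_triang|]. rewrite Rabs_Ropp. lra. }
  lra.
Qed.

Lemma ulim_ge F L c : ulim F L -> Uf u (fun i => c <= F i) -> c <= L.
Proof.
  intros H1 H2. destruct (Rle_dec c L) as [?|Hn]; auto. exfalso.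
  assert (He : 0 < c - L) by lra.
  apply (U_contra _ (U_and I u _ _ (H1 _ He) H2)). intros i [A B].
  apply Rabs_def2 in A. lra.
Qed.

Lemma ulim_le F L c : ulim F L -> Uf u (fun i => F i <= c) -> L <= c.
Proof.
  intros H1 H2. destruct (Rle_dec L c) as [?|Hn]; auto. exfalso.
  assert (He : 0 < L - c) by lra.
  apply (U_contra _ (U_and I u _ _ (H1 _ He) H2)). intros i [A B].
  apply Rabs_def2 in A. lra.
Qed.

End UFl.

Lemma compact_bound2 (h : R -> R -> R) (r : R) :
 (forall a b, Rabs a <= r -> Rabs b <= r -> exists d B, 0 < d /\
    forall t x, Rabs t <= r -> Rabs x <= r -> Rabs (t-a) < d -> Rabs (x-b) < d -> Rabs (h t x) <= B) ->
 exists B, forall t x, Rabs t <= r -> Rabs x <= r -> Rabs (h t x) <= B.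
Proof.
  intros Hloc. apply Classical_Prop.NNPP. intros Hn.
  set (Bs := fun (n : nat) (p : R * R) => Rabs (fst p) <= r /\ Rabs (snd p) <= r /\ INR n < Rabs (h (fst p) (snd p))).
  assert (Hne : forall n, exists p, Bs n p).
  { intros n. apply Classical_Prop.NNPP. intros Hno. apply Hn. exists (INR n).
    intros t x Ht Hx. destruct (Rle_dec (Rabs (h t x)) (INR n)) as [?|Hl]; auto.
    exfalso. apply Hno. exists (t, x). unfold Bs; simpl. repeat split; auto. lra. }
  assert (Hdec : forall n p, Bs (S n) p -> Bs n p).
  { intros n p (H1 & H2 & H3). repeat split; auto. rewrite S_INR in H3. lra. }
  destruct (UF_exists _ Bs Hne Hdec) as [u Hu].
  destruct (UF_lim u (fun p => fst p) r) as [a [Ha La]].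
  { apply (U_mono _ u (Bs 0%nat)); [intros p (H1 & H2 & H3); auto|apply Hu]. }
  destruct (UF_lim u (fun p => snd p) r) as [b [Hb Lb]].
  { apply (U_mono _ u (Bs 0%nat)); [intros p (H1 & H2 & H3); auto|apply Hu]. }
  destruct (Hloc a b Ha Hb) as [d [B [Hd HB]]].
  destruct (INR_unbounded B) as [n Hnb].
  apply (U_contra u _ (U_and3 u _ _ _ (La d Hd) (Lb d Hd) (Hu n))).
  intros p (H1 & H2 & H3 & H4 & H5). simpl in *.
  specialize (HB _ _ H3 H4 H1 H2). lra.
Qed.
Lemma ballR (x e y : R) : ball x e y <-> Rabs (y - x) < e.
Proof. unfold ball; simpl; unfold AbsRing_ball, abs, minus, plus, opp; simpl. tauto. Qed.

Lemma locR (x : R) (P : R -> Prop) :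
  locally x P <-> exists d, 0 < d /\ forall y, Rabs (y - x) < d -> P y.
Proof.
  split.
  - intros [e He]. exists e. split. apply cond_pos. intros y Hy. apply He. apply ballR. exact Hy.
  - intros [d [Hd H]]. exists (mkposreal d Hd). intros y Hy. apply H. apply ballR in Hy. exact Hy.
Qed.

Lemma rc_of (u : R -> R) a : filterlim u (at_right a) (locally (u a)) ->
  forall e, 0 < e -> exists d, 0 < d /\ forall t, a < t < a + d -> Rabs (u t - u a) < e.
Proof.
  intros H e He. apply filterlim_locally with (eps := mkposreal e He) in H.
  unfold at_right, within in H. apply locR in H. destruct H as [d [Hd H]].
  exists d. split; auto. intros t Ht. specialize (H t).
  assert (Rabs (t - a) < d) by (rewrite Rabs_pos_eq; lra).
  specialize (H H0 ltac:(lra)). apply ballR in H. exact H.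
Qed.

Lemma rc_to (u : R -> R) a :
  (forall e, 0 < e -> exists d, 0 < d /\ forall t, a < t < a + d -> Rabs (u t - u a) < e) ->
  filterlim u (at_right a) (locally (u a)).
Proof.
  intros H. apply filterlim_locally. intros [e He]. unfold at_right, within.
  apply locR. destruct (H e He) as [d [Hd H']]. exists d. split; auto.
  intros y Hy Hay. apply ballR. simpl. apply H'. split; auto.
  apply Rabs_def2 in Hy. lra.
Qed.

Lemma cont2_ed (g : R -> R -> R) : cont2 g -> forall t x e, 0 < e ->
  exists d, 0 < d /\ forall t' x', Rabs (t' - t) < d -> Rabs (x' - x) < d ->
     Rabs (g t' x' - g t x) < e.
Proof.
  intros H t x e He. specialize (H t x). unfold continuous in H.
  apply filterlim_locally with (eps := mkposreal e He) in H.
  destruct H as [[d Hd] H]. exists d. split; auto. intros t' x' H1 H2.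
  specialize (H (t', x')). simpl in H.
  assert (B : ball (t, x) d (t', x')).
  { split; simpl; apply ballR; auto. }
  specialize (H B). apply ballR in H. exact H.
Qed.

Lemma cont2_mk (g : R -> R -> R) : (forall t x e, 0 < e ->
  exists d, 0 < d /\ forall t' x', Rabs (t' - t) < d -> Rabs (x' - x) < d ->
     Rabs (g t' x' - g t x) < e) -> cont2 g.
Proof.
  intros H t x. unfold continuous. apply filterlim_locally. intros [e He].
  destruct (H t x e He) as [d [Hd H']]. exists (mkposreal d Hd).
  intros [t' x'] [B1 B2]. simpl in *. apply ballR in B1. apply ballR in B2.
  apply ballR. simpl. apply H'; auto.
Qed.

Lemma der_cont (u : R -> R) t l : is_derive u t l ->
  forall e, 0 < e -> exists d, 0 < d /\ forall s, Rabs (s - t) < d -> Rabs (u s - u t) < e.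
Proof.
  intros H e He. assert (C : continuous u t).
  { apply (@ex_derive_continuous R_AbsRing R_NormedModule). exists l. exact H. }
  unfold continuous in C. apply filterlim_locally with (eps := mkposreal e He) in C.
  apply locR in C. destruct C as [d [Hd C]]. exists d. split; auto.

Qed.

Lemma cpt_ed (u : R -> R) x : (forall e, 0 < e -> exists d, 0 < d /\ forall y, Rabs (y - x) < d -> Rabs (u y - u x) < e) -> continuity_pt u x.
Proof.
  intros H. unfold continuity_pt, continue_in, limit1_in, limit_in. simpl. unfold R_dist.
  intros e He. destruct (H e He) as [d [Hd H']]. exists d. split; auto.
  intros y [_ Hy]. apply H'. exact Hy.
Qed.

Lemma mvt' (u du : R -> R) a b : a < b ->
  (forall e, 0<e -> exists d, 0<d /\ forall t, a<t<a+d -> Rabs (u t - u a) < e) ->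
  (forall t, a < t <= b -> is_derive u t (du t)) ->
  exists c, a <= c <= b /\ u b - u a = du c * (b - a).
Proof.
  intros Hab Hrc Hd.
  set (v := fun t => u (Rmax a t)).
  destruct (MVT_gen v a b du) as [c [Hc Hv]].
  - rewrite Rmin_left, Rmax_right by lra. intros x Hx.
    apply (is_derive_ext_loc u v). 2: apply Hd; lra.
    apply locR. exists (x - a). split; [lra|]. intros y Hy. apply Rabs_def2 in Hy.
    unfold v. rewrite Rmax_right by lra. reflexivity.
  - rewrite Rmin_left, Rmax_right by lra. intros x Hx. apply cpt_ed. intros e He.
    destruct (Req_dec x a) as [Exa|Nxa].
    + subst x. destruct (Hrc e He) as [d [Hd0 H]]. exists d. split; auto.
      intros y Hy. unfold v. rewrite (Rmax_left a a) by lra.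
      destruct (Rle_dec y a).
      * rewrite Rmax_left by lra. rewrite Rminus_eq_0, Rabs_R0. lra.
      * rewrite Rmax_right by lra. apply H. apply Rabs_def2 in Hy. lra.
    + destruct (der_cont u x (du x) (Hd x ltac:(lra)) e He) as [d [Hd0 H]].
      exists (Rmin d (x - a)). split. apply Rmin_glb_lt; lra.
      intros y Hy. pose proof (Rmin_l d (x-a)). pose proof (Rmin_r d (x-a)).
      apply Rabs_def2 in Hy as Hy'.
      unfold v. rewrite !Rmax_right by lra. apply H. lra.
  - exists c. rewrite Rmin_left, Rmax_right in Hc by lra. split; auto.
    unfold v in Hv. rewrite Rmax_right, Rmax_left in Hv by lra. exact Hv.
Qed.

Lemma cont_ind (a b : R) (P : R -> Prop) : a <= b -> P a ->
 (forall t, a <= t < b -> (forall s, a <= s <= t -> P s) -> exists d, 0 < d /\ forall s, t < s < t + d -> P s) ->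
 (forall t, a < t <= b -> (forall s, a <= s < t -> P s) -> P t) ->
 forall t, a <= t <= b -> P t.
Proof.
  intros Hab Pa Hext Hcl.
  set (E := fun y => a <= y <= b /\ forall s, a <= s <= y -> P s).
  assert (EB : bound E) by (exists b; intros y [Hy _]; lra).
  assert (Ea : E a).
  { split; [lra|]. intros s Hs. replace s with a by lra. exact Pa. }
  destruct (completeness E EB (ex_intro _ a Ea)) as [L [HL1 HL2]].
  assert (aL : a <= L) by (apply HL1; exact Ea).
  assert (Lb : L <= b) by (apply HL2; intros y [Hy _]; lra).
  assert (C1 : forall s, a <= s < L -> P s).
  { intros s Hs. destruct (Classical_Prop.classic (exists y, E y /\ s < y)) as [[y [[_ Ey] Hy]]|Hn].
    - apply Ey. lra.
    - exfalso. assert (L <= s); [|lra]. apply HL2. intros y Ey.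
      destruct (Rle_dec y s); auto. exfalso. apply Hn. exists y. split; auto; lra. }
  assert (C2 : P L).
  { destruct (Req_dec L a) as [E1|N1]. rewrite E1; exact Pa. apply Hcl. lra. exact C1. }
  assert (EL : forall s, a <= s <= L -> P s).
  { intros s Hs. destruct (Req_dec s L) as [->|]; auto. apply C1. lra. }
  assert (Lb' : L = b).
  { destruct (Req_dec L b) as [?|NL]; auto. exfalso.
    destruct (Hext L ltac:(lra) EL) as [d [Hd Hs]].
    set (y := Rmin (L + d/2) b).
    assert (y <= L).
    { apply HL1. pose proof (Rmin_l (L + d/2) b). pose proof (Rmin_r (L + d/2) b).
      assert (a <= y) by (apply Rmin_glb; lra). fold y in H, H0.
      split. split; lra. intros s Hs'. destruct (Rle_dec s L). apply EL; lra. apply Hs. lra. }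
    unfold y in H. unfold Rmin in H. destruct (Rle_dec (L + d/2) b); lra. }
  intros t Ht. subst L. destruct (Req_dec t b) as [->|]; auto.
Qed.

Definition rcE (u : R -> R) a := forall e, 0<e -> exists d, 0<d /\ forall t, a<t<a+d -> Rabs (u t - u a) < e.

Lemma rc_of_der u t l : is_derive u t l -> rcE u t.
Proof.
  intros H e He. destruct (der_cont u t l H e He) as [d [Hd H']]. exists d. split; auto.
  intros s Hs. apply H'. rewrite Rabs_pos_eq; lra.
Qed.

Lemma barrier (u du : R -> R) a b B R0 : a <= b -> 0 <= B -> rcE u a ->
  (forall t, a < t <= b -> is_derive u t (du t)) ->
  (forall t, a <= t <= b -> Rabs (u t) <= R0 -> Rabs (du t) <= B) ->
  Rabs (u a) + B * (b - a) < R0 ->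
  forall t, a <= t <= b -> Rabs (u t - u a) <= B * (t - a).
Proof.
  intros Hab HB Hrc Hd Hbd Hst.
  apply (cont_ind a b (fun t => Rabs (u t - u a) <= B * (t - a))); auto.
  - rewrite Rminus_eq_0, Rabs_R0. lra.
  - intros t Ht HP. specialize (HP t ltac:(lra)).
    assert (Hut : Rabs (u t) < R0).
    { replace (u t) with ((u t - u a) + u a) by ring.
      eapply Rle_lt_trans. apply Rabs_triang. nra. }
    assert (Hrct : rcE u t).
    { destruct (Req_dec t a) as [->|]; auto. apply (rc_of_der u t (du t)). apply Hd. lra. }
    destruct (Hrct (R0 - Rabs (u t)) ltac:(lra)) as [d [Hd0 Hd1]].
    exists (Rmin d (b - t)). split. apply Rmin_glb_lt; lra.
    intros s Hs. pose proof (Rmin_l d (b-t)). pose proof (Rmin_r d (b-t)).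
    destruct (mvt' u du t s ltac:(lra) Hrct) as [c [Hc Hc']].
    { intros x Hx. apply Hd. lra. }
    assert (Huc : Rabs (u c) <= R0).
    { destruct (Req_dec c t) as [->|Nc]. lra.
      specialize (Hd1 c ltac:(lra)).
      replace (u c) with ((u c - u t) + u t) by ring.
      eapply Rle_trans. apply Rabs_triang. lra. }
    specialize (Hbd c ltac:(lra) Huc).
    replace (u s - u a) with ((u s - u t) + (u t - u a)) by ring.
    eapply Rle_trans. apply Rabs_triang. rewrite Hc', Rabs_mult, (Rabs_pos_eq (s - t)) by lra.
    assert (Rabs (du c) * (s - t) <= B * (s - t)) by (apply Rmult_le_compat_r; lra).
    lra.
  - intros t Ht HP. destruct (Rle_dec (Rabs (u t - u a)) (B * (t - a))) as [?|Hn]; auto.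
    exfalso. set (e := Rabs (u t - u a) - B * (t - a)).
    destruct (der_cont u t (du t) (Hd t Ht) e ltac:(unfold e; lra)) as [d [Hd0 Hd1]].
    set (s := Rmax a (t - d/2)).
    assert (Hs1 : a <= s) by apply Rmax_l.
    assert (Hs2 : t - d/2 <= s) by apply Rmax_r.
    assert (Hs3 : s < t) by (unfold s, Rmax; destruct (Rle_dec a (t - d/2)); lra).
    specialize (HP s ltac:(lra)). specialize (Hd1 s ltac:(apply Rabs_def1; lra)).
    assert (Rabs (u t - u a) <= Rabs (u s - u t) + Rabs (u s - u a)).
    { replace (u t - u a) with (-(u s - u t) + (u s - u a)) by ring.
      eapply Rle_trans. apply Rabs_triang. rewrite Rabs_Ropp. lra. }
    assert (B * (s - a) <= B * (t - a)) by (apply Rmult_le_compat_l; lra).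
    unfold e in Hd1. lra.
Qed.

Definition shift (g : R -> R -> R) h := fun t x => g (t + h) x.

Section Sol.
Variables (g : R -> R -> R) (w : R) (u : R -> R) (Hs : solution_Rplus g w u).

Lemma sol_0 : u 0 = w.
Proof. destruct (Hs 1 Rlt_0_1) as [H _]; exact H. Qed.

Lemma sol_der t : 0 < t -> is_derive u t (g t (u t)).
Proof. intros Ht. destruct (Hs (t + 1) ltac:(lra)) as [_ [_ H]]. apply H. lra. Qed.

Lemma sol_rc t : 0 <= t -> rcE u t.
Proof.
  intros Ht. destruct (Req_dec t 0) as [->|].
  - destruct (Hs 1 Rlt_0_1) as [_ [H _]]. intros e He. exact (rc_of u 0 H e He).
  - apply (rc_of_der u t (g t (u t))). apply sol_der. lra.
Qed.

Lemma sol_shift h : 0 <= h -> solution_Rplus (shift g h) (u h) (fun t => u (h + t)).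
Proof.
  intros Hh T HT. split; [|split].
  - simpl. rewrite Rplus_0_r. reflexivity.
  - apply (rc_to (fun t => u (h + t))). intros e He. simpl. rewrite Rplus_0_r.
    destruct (sol_rc h Hh e He) as [d [Hd H]]. exists d. split; auto.
    intros t Ht. apply H. lra.
  - intros t Ht. unfold shift.
    assert (D1 : is_derive u (h + t) (g (h + t) (u (h + t)))) by (apply sol_der; lra).
    assert (D2 : is_derive (fun t => h + t) t 1).
    { auto_derive; auto. }
    pose proof (is_derive_comp u (fun t => h + t) t _ _ D1 D2) as D.
    simpl in D. replace (t + h) with (h + t) by ring.
    replace (g (h + t) (u (h + t))) with (scal 1 (g (h + t) (u (h + t)))). exact D.
    unfold scal; simpl; unfold mult; simpl. ring.
Qed.
End Sol.

Lemma cont2_shift g h : cont2 g -> cont2 (shift g h).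
Proof.
  intros Hg. apply cont2_mk. intros t x e He. unfold shift.
  destruct (cont2_ed g Hg (t + h) x e He) as [d [Hd H]]. exists d. split; auto.
  intros t' x' H1 H2. apply H; auto. replace (t' + h - (t + h)) with (t' - t) by ring. exact H1.
Qed.

Lemma Hplus_shift f g h : 0 <= h -> in_Hplus f g -> in_Hplus f (shift g h).
Proof.
  intros Hh [Hc Ha]. split. apply cont2_shift; auto.
  intros r eps He. destruct (Ha (r + h) eps He) as [h0 [Hh0 H]].
  exists (h0 + h). split. lra. intros t x Ht Hx. unfold shift.
  replace (t + (h0 + h)) with ((t + h) + h0) by ring. apply H.
  - eapply Rle_trans. apply Rabs_triang. rewrite (Rabs_pos_eq h); lra.
  - pose proof (Rabs_pos x). nra.
Qed.


Lemma uniq_from f g : positively_regular f -> in_Hplus f g -> forall w u v,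
  solution_Rplus g w u -> solution_Rplus g w v -> forall t, 0 <= t -> u t = v t.
Proof.
  intros PR Hg w u v Hu Hv t Ht. destruct (PR g Hg w) as [p [Hp Hup]].
  rewrite (Hup (t + 1) u ltac:(lra) (Hu (t+1) ltac:(lra)) t ltac:(lra)).
  rewrite (Hup (t + 1) v ltac:(lra) (Hv (t+1) ltac:(lra)) t ltac:(lra)). reflexivity.
Qed.

Lemma order_sol f g : positively_regular f -> in_Hplus f g -> forall u v wu wv,
  solution_Rplus g wu u -> solution_Rplus g wv v -> wu <= wv -> forall t, 0 <= t -> u t <= v t.
Proof.
  intros PR Hg u v wu wv Hu Hv Hw b Hb.
  apply (cont_ind 0 b (fun s => u s <= v s)); auto.
  - rewrite (sol_0 _ _ _ Hu), (sol_0 _ _ _ Hv). exact Hw.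
  - intros s Hs HP. specialize (HP s ltac:(lra)). destruct HP as [Hlt|Heq].
    + destruct (sol_rc _ _ _ Hu s ltac:(lra) ((v s - u s)/2) ltac:(lra)) as [d1 [Hd1 H1]].
      destruct (sol_rc _ _ _ Hv s ltac:(lra) ((v s - u s)/2) ltac:(lra)) as [d2 [Hd2 H2]].
      exists (Rmin d1 d2). split. apply Rmin_glb_lt; lra. intros s' Hs'.
      pose proof (Rmin_l d1 d2). pose proof (Rmin_r d1 d2).
      specialize (H1 s' ltac:(lra)). specialize (H2 s' ltac:(lra)).
      apply Rabs_def2 in H1. apply Rabs_def2 in H2. lra.
    + exists 1. split. lra. intros s' Hs'.
      pose proof (sol_shift _ _ _ Hu s ltac:(lra)) as Su.
      pose proof (sol_shift _ _ _ Hv s ltac:(lra)) as Sv. rewrite Heq in Su.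
      pose proof (uniq_from f (shift g s) PR (Hplus_shift f g s ltac:(lra) Hg) _ _ _ Su Sv (s' - s) ltac:(lra)) as E.
      simpl in E. replace (s + (s' - s)) with s' in E by ring. rewrite E. lra.
  - intros s Hs HP. destruct (Rle_dec (u s) (v s)) as [?|Hn]; auto. exfalso.
    pose proof (der_cont u s _ (sol_der _ _ _ Hu s ltac:(lra)) ((u s - v s)/2) ltac:(lra)) as [d1 [Hd1 H1]].
    pose proof (der_cont v s _ (sol_der _ _ _ Hv s ltac:(lra)) ((u s - v s)/2) ltac:(lra)) as [d2 [Hd2 H2]].
    set (s' := Rmax 0 (s - Rmin d1 d2 / 2)).
    pose proof (Rmin_l d1 d2). pose proof (Rmin_r d1 d2).
    assert (0 < Rmin d1 d2) by (apply Rmin_glb_lt; lra).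
    assert (A1 : 0 <= s') by apply Rmax_l.
    assert (A2 : s - Rmin d1 d2 / 2 <= s') by apply Rmax_r.
    assert (A3 : s' < s) by (unfold s', Rmax; destruct (Rle_dec 0 (s - Rmin d1 d2 / 2)); lra).
    specialize (HP s' ltac:(lra)).
    specialize (H1 s' ltac:(apply Rabs_def1; lra)). specialize (H2 s' ltac:(apply Rabs_def1; lra)).
    apply Rabs_def2 in H1. apply Rabs_def2 in H2. lra.
  - lra.
Qed.

Lemma Ybound g w Y : solution_Rplus g w Y -> forall X, 0 <= X ->
  exists R0, forall t, 0 <= t <= X -> Rabs (Y t) <= R0.
Proof.
  intros HY X HX.
  destruct (compact_bound2 (fun t _ => Y (Rabs t)) X) as [B HB].
  - intros a b Ha Hb. destruct (Req_dec (Rabs a) 0) as [Ea|Na].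
    + destruct (sol_rc _ _ _ HY 0 ltac:(lra) 1 ltac:(lra)) as [d [Hd H]].
      exists d, (Rabs (Y 0) + 1). split; auto. intros t x Ht Hx Hta _.
      assert (Rabs t < d).
      { replace t with ((t - a) + a) by ring. eapply Rle_lt_trans. apply Rabs_triang. lra. }
      destruct (Req_dec (Rabs t) 0) as [E0|N0].
      * rewrite E0. lra.
      * pose proof (Rabs_pos t). specialize (H (Rabs t) ltac:(lra)).
        replace (Y (Rabs t)) with ((Y (Rabs t) - Y 0) + Y 0) by ring.
        eapply Rle_trans. apply Rabs_triang. lra.
    + pose proof (Rabs_pos a) as Pa.
      destruct (der_cont Y (Rabs a) _ (sol_der _ _ _ HY (Rabs a) ltac:(lra)) 1 ltac:(lra)) as [d [Hd H]].
      exists d, (Rabs (Y (Rabs a)) + 1). split; auto. intros t x Ht Hx Hta _.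
      assert (Rabs (Rabs t - Rabs a) < d).
      { eapply Rle_lt_trans. apply Rabs_triang_inv2. exact Hta. }
      specialize (H _ H0).
      replace (Y (Rabs t)) with ((Y (Rabs t) - Y (Rabs a)) + Y (Rabs a)) by ring.
      eapply Rle_trans. apply Rabs_triang. lra.
  - exists B. intros t Ht. specialize (HB t 0 ltac:(rewrite Rabs_pos_eq; lra) ltac:(rewrite Rabs_R0; lra)).
    rewrite (Rabs_pos_eq t) in HB by lra. exact HB.
Qed.

Lemma lip_sol gi w u B R1 xi : solution_Rplus gi w u ->
  (forall t x, 0 <= t <= xi -> Rabs x <= R1 -> Rabs (gi t x) <= B) ->
  (forall t, 0 <= t <= xi -> Rabs (u t) <= R1) ->
  forall s t, 0 <= s <= t -> t <= xi -> Rabs (u t - u s) <= B * (t - s).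
Proof.
  intros Hu Hg Hb s t Hst Htx. destruct (Req_dec s t) as [->|Ns].
  - rewrite Rminus_eq_0, Rabs_R0, Rminus_eq_0. lra.
  - destruct (mvt' u (fun c => gi c (u c)) s t ltac:(lra) (sol_rc _ _ _ Hu s ltac:(lra))) as [c [Hc E]].
    { intros x Hx. apply (sol_der _ _ _ Hu). lra. }
    rewrite E, Rabs_mult, (Rabs_pos_eq (t - s)) by lra.
    apply Rmult_le_compat_r. lra. apply Hg. lra. apply Hb. lra.
Qed.

Lemma tri3 a b c d : Rabs (a - d) <= Rabs (a - b) + Rabs (b - c) + Rabs (c - d).
Proof.
  replace (a - d) with ((a - b) + ((b - c) + (c - d))) by ring.
  eapply Rle_trans. apply Rabs_triang. pose proof (Rabs_triang (b - c) (c - d)). lra.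
Qed.

Lemma tri2 a b c : Rabs (a - c) <= Rabs (a - b) + Rabs (b - c).
Proof.
  replace (a - c) with ((a - b) + (b - c)) by ring. apply Rabs_triang.
Qed.

Lemma Rabs_sym a b : Rabs (a - b) = Rabs (b - a).
Proof. rewrite <- Rabs_Ropp. f_equal. ring. Qed.

Section CD.
Variables (I : Type) (U : UF I) (g : R -> R -> R) (w : R) (Y : R -> R).
Hypothesis HY : solution_Rplus g w Y.
Hypothesis HYu : forall T psi, 0 < T -> solution_on g w T psi -> forall t, 0 <= t < T -> psi t = Y t.
Variables (gi : I -> R -> R -> R) (yi : I -> R -> R).
Hypothesis Hsol : Uf U (fun i => solution_Rplus (gi i) (yi i 0) (yi i)).
Hypothesis H0 : ulim U (fun i => yi i 0) w.
Hypothesis Hcc : forall t0 x0 e, 0 < e -> exists d, 0 < d /\ Uf U (fun i => forall t x,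
   Rabs (t - t0) < d -> Rabs (x - x0) < d -> Rabs (gi i t x - g t0 x0) < e).
Hypothesis Hbd : forall r, exists B, Uf U (fun i => forall t x, 0 <= t <= r -> Rabs x <= r -> Rabs (gi i t x) <= B).

Lemma cdA xi B R1 : 0 < xi -> 0 <= B ->
  Uf U (fun i => solution_Rplus (gi i) (yi i 0) (yi i) /\
     (forall t x, 0 <= t <= xi -> Rabs x <= R1 -> Rabs (gi i t x) <= B) /\
     (forall t, 0 <= t <= xi -> Rabs (yi i t) <= R1)) ->
  forall t, 0 <= t <= xi -> ulim U (fun i => yi i t) (Y t).
Proof.
  intros Hxi HB HG.
  set (Z := fun t => epsilon (inhabits 0) (fun L => ulim U (fun i => yi i t) L)).
  assert (HZ : forall t, 0 <= t <= xi -> ulim U (fun i => yi i t) (Z t)).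
  { intros t Ht. unfold Z. apply epsilon_spec.
    destruct (UF_lim U (fun i => yi i t) R1) as [L [_ HL]].
    { eapply U_mono; [|exact HG]. intros i (_ & _ & Hi). apply Hi; auto. }
    exists L; exact HL. }
  assert (HZlip : forall s t, 0 <= s <= t -> t <= xi -> Rabs (Z t - Z s) <= B * (t - s)).
  { intros s t Hst Htx. apply Rnot_lt_le; intro Hc.
    set (e := (Rabs (Z t - Z s) - B*(t-s))/3).
    assert (He : 0 < e) by (unfold e; lra).
    apply (U_contra U _ (U_and3 U _ _ _ HG (HZ t ltac:(lra) e He) (HZ s ltac:(lra) e He))).
    intros i [[Hs [Hg Hb]] [A1 A2]].
    pose proof (lip_sol _ _ _ B R1 xi Hs Hg Hb s t Hst Htx) as L.
    pose proof (tri3 (Z t) (yi i t) (yi i s) (Z s)) as T.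
    rewrite (Rabs_sym (Z t) (yi i t)) in T. cbv beta in A1, A2. unfold e in *. lra. }
  assert (HZ0 : Z 0 = w).
  { apply (ulim_unique U (fun i => yi i 0)). apply HZ; lra. exact H0. }
  assert (HZd : forall x, 0 < x < xi -> is_derive Z x (g x (Z x))).
  { intros x Hx. apply is_derive_Reals. intros eps Heps.
    set (e := eps/4).
    destruct (Hcc x (Z x) e ltac:(unfold e; lra)) as [d [Hd Hc]].
    assert (HdB : 0 < d / (2 * (B + 1))) by (apply Rdiv_lt_0_compat; lra).
    set (del := Rmin (Rmin (d/2) (d/(2*(B+1)))) (Rmin x (xi - x))).
    assert (Hdel : 0 < del).
    { unfold del. apply Rmin_glb_lt; apply Rmin_glb_lt; lra. }
    exists (mkposreal del Hdel). intros h Hh0 Hh. simpl in Hh.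
    assert (D1 : Rabs h < d/2) by (eapply Rlt_le_trans; [exact Hh|]; unfold del;
      eapply Rle_trans; apply Rmin_l).
    assert (D2 : Rabs h < d/(2*(B+1))) by (eapply Rlt_le_trans; [exact Hh|]; unfold del;
      eapply Rle_trans; [apply Rmin_l|apply Rmin_r]).
    assert (D3 : Rabs h < x) by (eapply Rlt_le_trans; [exact Hh|]; unfold del;
      eapply Rle_trans; [apply Rmin_r|apply Rmin_l]).
    assert (D4 : Rabs h < xi - x) by (eapply Rlt_le_trans; [exact Hh|]; unfold del;
      eapply Rle_trans; [apply Rmin_r|apply Rmin_r]).
    assert (Hah : 0 < Rabs h) by (apply Rabs_pos_lt; exact Hh0).
    assert (D5 : B * Rabs h < d / 2).
    { assert (E : d / (2 * (B+1)) * (2 * (B + 1)) = d) by (field; lra).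
      assert (B * Rabs h <= B * (d / (2 * (B + 1)))) by (apply Rmult_le_compat_l; lra).
      nra. }
    apply Rabs_def2 in D3 as D3'. apply Rabs_def2 in D4 as D4'.
    assert (He1 : 0 < Rmin (d/2) (e * Rabs h)) by (apply Rmin_glb_lt; unfold e; nra).
    assert (He2 : 0 < e * Rabs h) by (unfold e; nra).
    destruct (U_ne _ U _ (U_and I U _ _ (U_and3 U _ _ _ HG Hc (HZ x ltac:(lra) _ He1))
                                       (HZ (x+h) ltac:(lra) _ He2)))
      as [i [[[Hs [Hg Hb]] [Hci Hzx]] Hzxh]].
    assert (Hm : exists c, 0 <= c <= xi /\ Rabs (c - x) <= Rabs h /\
               yi i (x+h) - yi i x = gi i c (yi i c) * h).
    { destruct (Rlt_dec 0 h) as [hp|hn].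
      - rewrite Rabs_pos_eq in * by lra.
        destruct (mvt' (yi i) (fun c => gi i c (yi i c)) x (x+h) ltac:(lra) (sol_rc _ _ _ Hs x ltac:(lra)))
          as [c [Hc1 Hc2]].
        { intros t Ht. apply (sol_der _ _ _ Hs). lra. }
        exists c. split. lra. split. rewrite Rabs_pos_eq; lra. rewrite Hc2. ring.
      - assert (h < 0) by lra. rewrite Rabs_left in * by lra.
        destruct (mvt' (yi i) (fun c => gi i c (yi i c)) (x+h) x ltac:(lra) (sol_rc _ _ _ Hs (x+h) ltac:(lra)))
          as [c [Hc1 Hc2]].
        { intros t Ht. apply (sol_der _ _ _ Hs). lra. }
        exists c. split. lra. split. rewrite Rabs_left1; lra.
        replace (yi i (x + h) - yi i x) with (-(yi i x - yi i (x+h))) by ring. rewrite Hc2. ring. }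
    destruct Hm as [c [Hc1 [Hc2 Hc3]]].
    assert (Hyc : Rabs (yi i c - yi i x) <= B * Rabs h).
    { destruct (Rle_dec x c).
      - pose proof (lip_sol _ _ _ B R1 xi Hs Hg Hb x c ltac:(lra) ltac:(lra)).
        rewrite Rabs_pos_eq in Hc2 by lra.
        assert (B * (c - x) <= B * Rabs h) by (apply Rmult_le_compat_l; lra). lra.
      - pose proof (lip_sol _ _ _ B R1 xi Hs Hg Hb c x ltac:(lra) ltac:(lra)).
        rewrite Rabs_left in Hc2 by lra. rewrite Rabs_sym.
        assert (B * (x - c) <= B * Rabs h) by (apply Rmult_le_compat_l; lra). lra. }
    pose proof (Rmin_l (d/2) (e * Rabs h)). pose proof (Rmin_r (d/2) (e * Rabs h)).
    assert (Hgc : Rabs (gi i c (yi i c) - g x (Z x)) < e).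
    { apply Hci. lra. pose proof (tri2 (yi i c) (yi i x) (Z x)). lra. }
    assert (Eq : (Z (x + h) - Z x) / h - g x (Z x) =
       ((Z (x+h) - yi i (x+h)) - (Z x - yi i x)) / h + (gi i c (yi i c) - g x (Z x))).
    { replace (Z (x+h) - Z x) with (((Z (x+h) - yi i (x+h)) - (Z x - yi i x)) + gi i c (yi i c) * h)
        by (rewrite <- Hc3; ring). field. exact Hh0. }
    rewrite Eq. eapply Rle_lt_trans. apply Rabs_triang.
    unfold Rdiv. rewrite Rabs_mult, Rabs_Rinv by auto.
    assert (Rabs ((Z (x+h) - yi i (x+h)) - (Z x - yi i x)) < 2 * e * Rabs h).
    { eapply Rle_lt_trans. apply Rabs_triang. rewrite Rabs_Ropp.
      rewrite (Rabs_sym (Z (x+h)) (yi i (x+h))), (Rabs_sym (Z x) (yi i x)). lra. }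
    assert (Rabs ((Z (x+h) - yi i (x+h)) - (Z x - yi i x)) * / Rabs h < 2 * e).
    { apply (Rmult_lt_reg_r (Rabs h)); auto. rewrite Rmult_assoc, Rinv_l by lra. lra. }
    unfold e in *. lra. }
  assert (Hsolon : solution_on g w xi Z).
  { split; [|split].
    - exact HZ0.
    - apply rc_to. intros e He. exists (Rmin xi (e / (B + 1))). split.
      apply Rmin_glb_lt; auto. apply Rdiv_lt_0_compat; lra.
      intros t Ht. pose proof (Rmin_l xi (e/(B+1))). pose proof (Rmin_r xi (e/(B+1))).
      pose proof (HZlip 0 t ltac:(lra) ltac:(lra)).
      assert (E : e / (B + 1) * (B + 1) = e) by (field; lra).
      assert (B * (t - 0) <= B * (e / (B + 1))) by (apply Rmult_le_compat_l; lra).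
      nra.
    - intros t Ht. apply HZd. exact Ht. }
  pose proof (HYu xi Z Hxi Hsolon) as EZ.
  assert (EZxi : Z xi = Y xi).
  { destruct (Req_dec (Z xi) (Y xi)) as [?|Hn]; auto. exfalso.
    set (e := Rabs (Z xi - Y xi) / 4).
    assert (He : 0 < e) by (unfold e; apply Rdiv_lt_0_compat; [apply Rabs_pos_lt; lra|lra]).
    destruct (der_cont Y xi _ (sol_der _ _ _ HY xi Hxi) e He) as [d [Hd HYc]].
    set (m := Rmin (Rmin (d/2) (xi/2)) (e / (B + 1))).
    assert (Hm : 0 < m) by (unfold m; apply Rmin_glb_lt; [apply Rmin_glb_lt; lra|apply Rdiv_lt_0_compat; lra]).
    assert (Hm1 : m <= d/2) by (unfold m; eapply Rle_trans; apply Rmin_l).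
    assert (Hm2 : m <= xi/2) by (unfold m; eapply Rle_trans; [apply Rmin_l|apply Rmin_r]).
    assert (Hm3 : m <= e/(B+1)) by (unfold m; apply Rmin_r).
    pose proof (HZlip (xi - m) xi ltac:(lra) ltac:(lra)) as L1.
    specialize (EZ (xi - m) ltac:(lra)).
    specialize (HYc (xi - m) ltac:(rewrite Rabs_left1; lra)).
    assert (E : e / (B + 1) * (B + 1) = e) by (field; lra).
    assert (B * (xi - (xi - m)) <= B * (e / (B + 1))) by (apply Rmult_le_compat_l; lra).
    pose proof (tri3 (Z xi) (Z (xi - m)) (Y (xi - m)) (Y xi)) as T.
    rewrite EZ, Rminus_eq_0, Rabs_R0 in T. rewrite EZ in L1.
    assert (E4 : 4 * e = Rabs (Z xi - Y xi)) by (unfold e; field).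
    assert (Eq : B * (e / (B + 1)) = e - e / (B + 1)) by (field; lra).
    assert (0 < e / (B+1)) by (apply Rdiv_lt_0_compat; lra).
    clearbody e. lra. }
  intros t Ht. assert (E : Z t = Y t).
  { destruct (Req_dec t xi) as [->|]; auto. apply EZ. lra. }
  rewrite <- E. apply HZ. exact Ht.
Qed.

Lemma cd X : 0 <= X -> ulim U (fun i => yi i X) (Y X).
Proof.
  intros HX.
  destruct (Ybound g w Y HY X HX) as [R0 HR0].
  assert (HR0p : 0 <= R0) by (pose proof (HR0 0 ltac:(lra)); pose proof (Rabs_pos (Y 0)); lra).
  set (R1 := R0 + 1).
  destruct (Hbd (Rmax X R1)) as [B0 HB0].
  set (B := Rmax B0 0).
  assert (HB : 0 <= B) by apply Rmax_r.
  assert (HB0B : B0 <= B) by apply Rmax_l.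
  set (h0 := 1 / (4 * (B + 1))).
  assert (Hh0 : 0 < h0) by (unfold h0; apply Rdiv_lt_0_compat; lra).
  assert (Hh0B : B * h0 < 1/4).
  { assert (E : h0 * (4 * (B + 1)) = 1) by (unfold h0; field; lra). nra. }
  assert (Hw : Y 0 = w) by exact (sol_0 _ _ _ HY).
  set (Good := fun xi => Uf U (fun i => solution_Rplus (gi i) (yi i 0) (yi i) /\
     (forall t x, 0 <= t <= xi -> Rabs x <= R1 -> Rabs (gi i t x) <= B) /\
     (forall t, 0 <= t <= xi -> Rabs (yi i t) <= R1))).
  assert (Glim : forall xi, 0 <= xi <= X -> Good xi -> ulim U (fun i => yi i xi) (Y xi)).
  { intros xi Hxi G. destruct (Req_dec xi 0) as [->|Nx].
    - rewrite Hw. exact H0.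
    - apply (cdA xi B R1 ltac:(lra) HB G). lra. }
  assert (Step : forall n, Good (Rmin X (INR n * h0))).
  { induction n as [|n IH].
    - simpl. rewrite Rmult_0_l, Rmin_right by lra.
      eapply U_mono; [|exact (U_and _ U _ _ (U_and _ U _ _ Hsol HB0) (H0 1 ltac:(lra)))].
      intros i [[Hs Hb] Hi]. split; auto. split.
      + intros t x Ht Hx. eapply Rle_trans; [|exact HB0B]. apply Hb.
        pose proof (Rmax_l X R1). lra. pose proof (Rmax_r X R1). lra.
      + intros t Ht. replace t with 0 by lra. pose proof (HR0 0 ltac:(lra)).
        pose proof (tri2 (yi i 0) w 0) as T2. rewrite !Rminus_0_r in T2. rewrite <- Hw in *.
        unfold R1. lra.
    - set (xi := Rmin X (INR n * h0)) in *.
      set (xi' := Rmin X (INR (S n) * h0)).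
      assert (Hx1 : 0 <= xi).
      { unfold xi. apply Rmin_glb; auto. pose proof (pos_INR n). nra. }
      assert (Hx2 : xi <= xi').
      { unfold xi, xi'. rewrite S_INR. unfold Rmin.
        destruct (Rle_dec X (INR n * h0)), (Rle_dec X ((INR n + 1) * h0)); nra. }
      assert (Hx3 : xi' <= xi + h0).
      { unfold xi, xi'. rewrite S_INR. unfold Rmin.
        destruct (Rle_dec X (INR n * h0)), (Rle_dec X ((INR n + 1) * h0)); nra. }
      assert (Hx4 : xi' <= X) by apply Rmin_l.
      pose proof (Glim xi ltac:(lra) IH) as Lxi.
      eapply U_mono; [|exact (U_and _ U _ _ (U_and _ U _ _ IH HB0) (Lxi (1/2) ltac:(lra)))].
      intros i [[[Hs [Hg Hb]] Hb0] Hi]. cbv beta in Hi.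
      assert (Hbd' : forall t x, 0 <= t <= xi' -> Rabs x <= R1 -> Rabs (gi i t x) <= B).
      { intros t x Ht Hx. eapply Rle_trans; [|exact HB0B]. apply Hb0.
        pose proof (Rmax_l X R1). lra. pose proof (Rmax_r X R1). lra. }
      split; auto. split; auto.
      assert (HYxi := HR0 xi ltac:(lra)).
      assert (Hyxi : Rabs (yi i xi) <= R0 + 1/2).
      { pose proof (tri2 (yi i xi) (Y xi) 0) as T2. rewrite !Rminus_0_r in T2. lra. }
      assert (Bar := barrier (yi i) (fun t => gi i t (yi i t)) xi xi' B R1 Hx2 HB
               (sol_rc _ _ _ Hs xi Hx1)).
      intros t Ht. destruct (Rle_dec t xi) as [Hle|Hgt]. apply Hb. lra.
      assert (Bt : Rabs (yi i t - yi i xi) <= B * (t - xi)).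
      { apply Bar; try lra.
        - intros s Hs'. apply (sol_der _ _ _ Hs). lra.
        - intros s Hs' Hys. apply Hbd'. lra. exact Hys.
        - assert (B * (xi' - xi) <= B * h0) by (apply Rmult_le_compat_l; lra).
          unfold R1. lra. }
      assert (B * (t - xi) <= B * h0) by (apply Rmult_le_compat_l; lra).
      pose proof (tri2 (yi i t) (yi i xi) 0) as T2. rewrite !Rminus_0_r in T2. unfold R1. lra. }
  destruct (INR_unbounded (X / h0)) as [n Hn].
  assert (E : Rmin X (INR n * h0) = X).
  { apply Rmin_left. assert (X / h0 * h0 = X) by (field; lra). nra. }
  apply Glim. lra. rewrite <- E. apply Step.
Qed.

End CD.

Lemma ulim_ext {I : Type} (U : UF I) F G L : (forall i, F i = G i) -> ulim U F L -> ulim U G L.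
Proof. intros E H e He. eapply U_mono; [|exact (H e He)]. intros i Hi. rewrite <- E. exact Hi. Qed.

Lemma ulim_minus {I : Type} (U : UF I) F G L1 L2 : ulim U F L1 -> ulim U G L2 ->
  ulim U (fun i => F i - G i) (L1 - L2).
Proof.
  intros H1 H2 e He. eapply U_mono; [|exact (U_and _ U _ _ (H1 (e/2) ltac:(lra)) (H2 (e/2) ltac:(lra)))].
  intros i [A B]. replace (F i - G i - (L1 - L2)) with ((F i - L1) - (G i - L2)) by ring.
  eapply Rle_lt_trans. apply Rabs_triang. rewrite Rabs_Ropp. lra.
Qed.

Section Main.
Variables (tau : R) (f P Q : R -> R -> R).
Hypothesis Htau : 0 < tau.
Hypothesis Hf : cont2 f.
Hypothesis HP : cont2 P.
Hypothesis HfPQ : forall t x, f t x = P t x + Q t x.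
Hypothesis Hper : forall t x, P (t + tau) x = P t x.
Hypothesis HQl : forall r eps, 0 < eps -> exists T0, forall t x, T0 <= t -> Rabs x <= r -> Rabs (Q t x) < eps.
Hypothesis PR : positively_regular f.

Lemma per_nat n t x : P (t + INR n * tau) x = P t x.
Proof.
  induction n. simpl. rewrite Rmult_0_l, Rplus_0_r. reflexivity.
  rewrite S_INR. replace (t + (INR n + 1) * tau) with ((t + INR n * tau) + tau) by ring.
  rewrite Hper. exact IHn.
Qed.

Lemma per_Z k t x : P (t + IZR k * tau) x = P t x.
Proof.
  destruct (Z.le_gt_cases 0 k) as [Hk|Hk].
  - rewrite <- (Z2Nat.id k Hk), <- INR_IZR_INZ. apply per_nat.
  - assert (Hk' : (0 <= - k)%Z) by lia.
    replace (IZR k) with (- IZR (- k)) by (rewrite opp_IZR; ring).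
    rewrite <- (Z2Nat.id (-k) Hk'), <- INR_IZR_INZ.
    rewrite <- (per_nat (Z.to_nat (- k)) (t + - INR (Z.to_nat (- k)) * tau) x).
    f_equal. ring.
Qed.

Definition phase t := t - IZR (Int_part (t / tau)) * tau.

Lemma phase_bd t : 0 <= phase t < tau.
Proof.
  unfold phase. destruct (base_Int_part (t / tau)) as [H1 H2].
  assert (E : t / tau * tau = t) by (field; lra).
  split.
  - assert (IZR (Int_part (t / tau)) * tau <= t / tau * tau) by (apply Rmult_le_compat_r; lra). lra.
  - assert ((t / tau - 1) * tau < IZR (Int_part (t / tau)) * tau) by (apply Rmult_lt_compat_r; lra). lra.
Qed.

Definition near_phase T s rho := exists m : Z, Rabs (T - IZR m * tau - s) < rho.

Lemma phase_near t s rho : Rabs (phase t - s) < rho -> near_phase t s rho.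
Proof. intros H. exists (Int_part (t / tau)). exact H. Qed.

Lemma PB r : exists B, forall t x, Rabs x <= r -> Rabs (P t x) <= B.
Proof.
  destruct (compact_bound2 P (Rmax r tau)) as [B HB].
  - intros a b _ _. destruct (cont2_ed P HP a b 1 ltac:(lra)) as [d [Hd H]].
    exists d, (Rabs (P a b) + 1). split; auto. intros t x _ _ H1 H2. specialize (H t x H1 H2).
    pose proof (tri2 (P t x) (P a b) 0). rewrite !Rminus_0_r in H0. lra.
  - exists B. intros t x Hx.
    assert (E : P t x = P (phase t) x).
    { rewrite <- (per_Z (Int_part (t / tau)) (phase t) x). f_equal. unfold phase; ring. }
    rewrite E. apply HB.
    + pose proof (phase_bd t). pose proof (Rmax_r r tau). rewrite Rabs_pos_eq; lra.
    + pose proof (Rmax_l r tau). lra.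
Qed.

Lemma Hplus_Ps s : 0 <= s -> in_Hplus f (shift P s).
Proof.
  intros Hs. split. apply cont2_shift; auto.
  intros r eps He. destruct (HQl r eps He) as [T0 HT0].
  destruct (INR_unbounded ((Rabs T0 + r) / tau)) as [n Hn].
  exists (INR n * tau + s). split. pose proof (pos_INR n). nra.
  intros t x Ht Hx. unfold shift. rewrite HfPQ.
  replace (t + (INR n * tau + s)) with ((t + s) + INR n * tau) at 1 by ring. rewrite per_nat.
  replace (P (t + s) x + Q (t + (INR n * tau + s)) x - P (t + s) x) with (Q (t + (INR n * tau + s)) x) by ring.
  apply HT0; auto.
  assert ((Rabs T0 + r) / tau * tau = Rabs T0 + r) by (field; lra).
  assert (INR n * tau > (Rabs T0 + r)) by nra.
  pose proof (Rle_abs T0). apply Rabs_le_between in Ht. lra.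
Qed.

Lemma Hplus_f : in_Hplus f f.
Proof.
  split. exact Hf. intros r eps He. exists 0. split. lra. intros t x _ _.
  rewrite Rplus_0_r, Rminus_eq_0, Rabs_R0. exact He.
Qed.

Lemma conv_cc {I : Type} (U : UF I) (T : I -> R) s : (forall K, Uf U (fun i => K <= T i)) ->
  (forall rho, 0 < rho -> Uf U (fun i => near_phase (T i) s rho)) ->
  forall t0 x0 e, 0 < e -> exists d, 0 < d /\ Uf U (fun i => forall t x,
    Rabs (t - t0) < d -> Rabs (x - x0) < d -> Rabs (shift f (T i) t x - shift P s t0 x0) < e).
Proof.
  intros HK Hn t0 x0 e He.
  destruct (cont2_ed P HP (t0 + s) x0 (e/2) ltac:(lra)) as [d1 [Hd1 Hc]].
  destruct (HQl (Rabs x0 + d1) (e/2) ltac:(lra)) as [T0 HT0].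
  exists (d1/2). split. lra.
  eapply U_mono; [|exact (U_and _ U _ _ (HK (T0 + Rabs t0 + d1)) (Hn (d1/2) ltac:(lra)))].
  intros i [HKi [m Hm]] t x Ht Hx. unfold shift. rewrite HfPQ.
  assert (E : P (t + T i) x = P (t + (T i - IZR m * tau)) x).
  { rewrite <- (per_Z m (t + (T i - IZR m * tau)) x). f_equal. ring. }
  rewrite E.
  assert (A1 : Rabs (P (t + (T i - IZR m * tau)) x - P (t0 + s) x0) < e/2).
  { apply Hc.
    - replace (t + (T i - IZR m * tau) - (t0 + s)) with ((t - t0) + (T i - IZR m * tau - s)) by ring.
      eapply Rle_lt_trans. apply Rabs_triang. lra.
    - lra. }
  assert (A2 : Rabs (Q (t + T i) x) < e/2).
  { apply HT0.
    - apply Rabs_def2 in Ht. pose proof (Rle_abs (-t0)). rewrite Rabs_Ropp in H. lra.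
    - pose proof (tri2 x x0 0). rewrite !Rminus_0_r in H. lra. }
  replace (P (t + (T i - IZR m * tau)) x + Q (t + T i) x - P (t0 + s) x0)
    with ((P (t + (T i - IZR m * tau)) x - P (t0 + s) x0) + Q (t + T i) x) by ring.
  eapply Rle_lt_trans. apply Rabs_triang. lra.
Qed.

Lemma conv_bd {I : Type} (U : UF I) (T : I -> R) : (forall K, Uf U (fun i => K <= T i)) ->
  forall r, exists B, Uf U (fun i => forall t x, 0 <= t <= r -> Rabs x <= r -> Rabs (shift f (T i) t x) <= B).
Proof.
  intros HK r. destruct (PB r) as [B1 HB1]. destruct (HQl r 1 ltac:(lra)) as [T0 HT0].
  exists (B1 + 1). eapply U_mono; [|exact (HK T0)]. intros i Hi t x Ht Hx.
  unfold shift. rewrite HfPQ. eapply Rle_trans. apply Rabs_triang.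
  pose proof (HB1 (t + T i) x Hx). pose proof (HT0 (t + T i) x ltac:(lra) Hx). lra.
Qed.

Lemma near_shift T s rho n : near_phase T s rho -> near_phase (T + INR n * tau) s rho.
Proof.
  intros [m Hm]. exists (m + Z.of_nat n)%Z. rewrite plus_IZR, <- INR_IZR_INZ.
  replace (T + INR n * tau - (IZR m + INR n) * tau - s) with (T - IZR m * tau - s) by ring. exact Hm.
Qed.

Lemma near_mono T s r1 r2 : r1 <= r2 -> near_phase T s r1 -> near_phase T s r2.
Proof. intros H [m Hm]. exists m. lra. Qed.

Lemma inv_small r : 0 < r -> exists n : nat, forall m, (n <= m)%nat -> / (INR m + 1) < r.
Proof.
  intros Hr. destruct (INR_unbounded (/ r)) as [n Hn]. exists n. intros m Hm.
  apply le_INR in Hm. pose proof (pos_INR m).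
  apply (Rmult_lt_reg_l (INR m + 1)). lra. rewrite Rinv_r by lra.
  assert (/ r * r = 1) by (field; lra). nra.
Qed.

Lemma one_sided (psi : R -> R) u0 M : solution_Rplus f u0 psi ->
  (forall t, 0 <= t -> Rabs (psi t) <= M) ->
  forall eps, 0 < eps -> exists K, forall t, K <= t -> psi (t + tau) - psi t < eps.
Proof.
  intros Hpsi HM eps Heps.
  apply Classical_Prop.NNPP; intro Hno.
  set (Bs := fun (n : nat) (t : R) => INR n <= t /\ eps <= psi (t + tau) - psi t).
  assert (Hne : forall n, exists t, Bs n t).
  { intros n. apply Classical_Prop.NNPP. intros Hn. apply Hno. exists (INR n). intros t Ht.
    apply Rnot_le_lt. intros Hl. apply Hn. exists t. split; auto. }
  assert (Hdec : forall n t, Bs (S n) t -> Bs n t).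
  { intros n t [H1 H2]. split; auto. rewrite S_INR in H1. lra. }
  destruct (UF_exists _ Bs Hne Hdec) as [U HU].
  assert (HK : forall K, Uf U (fun t => K <= t)).
  { intros K. destruct (INR_unbounded K) as [n Hn]. eapply U_mono; [|exact (HU n)].
    intros t [H1 _]. lra. }
  destruct (UF_lim U phase tau) as [s [_ Hs]].
  { eapply U_mono; [|exact (U_true _ U)]. intros t _. pose proof (phase_bd t).
    rewrite Rabs_pos_eq; lra. }
  assert (s0 : 0 <= s).
  { apply (ulim_ge U phase); auto. eapply U_mono; [|exact (U_true _ U)].
    intros t _. apply phase_bd. }
  assert (Hnear : forall rho, 0 < rho -> Uf U (fun t => near_phase t s rho)).
  { intros rho Hr. eapply U_mono; [|exact (Hs rho Hr)]. intros t Ht. apply phase_near. exact Ht. }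
  destruct (UF_lim U psi M) as [z [_ Hz]].
  { eapply U_mono; [|exact (HK 0)]. intros t Ht. apply HM. exact Ht. }
  pose proof (Hplus_Ps s s0) as Hg.
  destruct (PR _ Hg z) as [Y [HY HYu]].
  assert (HYu' : forall T psi0, 0 < T -> solution_on (shift P s) z T psi0 -> forall t, 0 <= t < T -> psi0 t = Y t).
  { intros T psi0 HT Hp t Ht. exact (HYu T psi0 HT Hp t Ht). }
  assert (LY : ulim U (fun t => psi (t + tau)) (Y tau)).
  { apply (cd R U (shift P s) z Y HY HYu' (fun t => shift f t) (fun t x => psi (t + x))).
    - eapply U_mono; [|exact (HK 0)]. intros t Ht. cbv beta. rewrite Rplus_0_r.
      exact (sol_shift _ _ _ Hpsi t Ht).
    - eapply ulim_ext; [|exact Hz]. intros t. cbv beta. rewrite Rplus_0_r. reflexivity.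
    - exact (conv_cc U (fun t => t) s HK Hnear).
    - exact (conv_bd U (fun t => t) HK).
    - lra. }
  assert (HYz : eps <= Y tau - z).
  { apply (ulim_ge U (fun t => psi (t + tau) - psi t)). apply ulim_minus; auto.
    eapply U_mono; [|exact (HU 0%nat)]. intros t [_ H]. exact H. }
  assert (Trap : exists eta rho K, 0 < eta /\ 0 < rho /\ 0 <= K /\ forall T, K <= T -> near_phase T s rho ->
     forall phi, solution_Rplus (shift f T) (z - eta) phi -> z + eps/2 < phi tau).
  { apply Classical_Prop.NNPP; intro Hno2.
    set (B2 := fun (n : nat) (p : R * (R -> R)) => exists m, (n <= m)%nat /\ INR m <= fst p /\
      near_phase (fst p) s (/ (INR m + 1)) /\ solution_Rplus (shift f (fst p)) (z - / (INR m + 1)) (snd p)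
      /\ snd p tau <= z + eps/2).
    assert (Hne2 : forall n, exists p, B2 n p).
    { intros n. apply Classical_Prop.NNPP. intros Hn. apply Hno2.
      pose proof (pos_INR n).
      exists (/ (INR n + 1)), (/ (INR n + 1)), (INR n). split. apply Rinv_0_lt_compat; lra.
      split. apply Rinv_0_lt_compat; lra. split. auto.
      intros T HT Hnr phi Hphi. apply Rnot_le_lt. intros Hl. apply Hn. exists (T, phi).
      exists n. simpl. split. lia. split. exact HT. split. exact Hnr. split. exact Hphi. lra. }
    assert (Hdec2 : forall n p, B2 (S n) p -> B2 n p).
    { intros n p [m [Hm H]]. exists m. split; auto. lia. }
    destruct (UF_exists _ B2 Hne2 Hdec2) as [V HV].
    assert (HK2 : forall K, Uf V (fun p => K <= fst p)).
    { intros K. destruct (INR_unbounded K) as [n Hn]. eapply U_mono; [|exact (HV n)].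
      intros p [m [Hm [H1 _]]]. apply le_INR in Hm. lra. }
    assert (Hnear2 : forall rho, 0 < rho -> Uf V (fun p => near_phase (fst p) s rho)).
    { intros rho Hr. destruct (inv_small rho Hr) as [n Hn]. eapply U_mono; [|exact (HV n)].
      intros p [m [Hm [_ [H1 _]]]]. eapply near_mono; [|exact H1]. left. apply Hn. exact Hm. }
    assert (LV : ulim V (fun p => snd p tau) (Y tau)).
    { apply (cd _ V (shift P s) z Y HY HYu' (fun p => shift f (fst p)) (fun p => snd p)).
      - eapply U_mono; [|exact (HV 0%nat)]. intros p [m [_ [_ [_ [H1 _]]]]].
        rewrite (sol_0 _ _ _ H1). exact H1.
      - intros e He. destruct (inv_small e He) as [n Hn]. eapply U_mono; [|exact (HV n)].
        intros p [m [Hm [_ [_ [H1 _]]]]]. rewrite (sol_0 _ _ _ H1).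
        replace (z - / (INR m + 1) - z) with (- / (INR m + 1)) by ring. rewrite Rabs_Ropp.
        pose proof (pos_INR m). rewrite Rabs_pos_eq. apply Hn; auto.
        left. apply Rinv_0_lt_compat. lra.
      - exact (conv_cc V (fun p => fst p) s HK2 Hnear2).
      - exact (conv_bd V (fun p => fst p) HK2).
      - lra. }
    assert (Y tau <= z + eps/2).
    { apply (ulim_le V (fun p => snd p tau)); auto. eapply U_mono; [|exact (HV 0%nat)].
      intros p [m [_ [_ [_ [_ H1]]]]]. exact H1. }
    lra. }
  destruct Trap as [eta [rho [K [Heta [Hrho [HK0 Trap]]]]]].
  assert (Lip : exists L K1, 0 <= L /\ 0 <= K1 /\ forall a b, K1 <= a <= b -> Rabs (psi b - psi a) <= L * (b - a)).
  { destruct (PB M) as [B1 HB1]. destruct (HQl M 1 ltac:(lra)) as [T0 HT0].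
    exists (Rmax 0 (B1 + 1)), (Rmax 0 T0). split. apply Rmax_l. split. apply Rmax_l.
    intros a b Hab. pose proof (Rmax_l 0 T0). pose proof (Rmax_r 0 T0).
    pose proof (Rmax_l 0 (B1 + 1)). pose proof (Rmax_r 0 (B1 + 1)).
    destruct (Req_dec a b) as [->|Nab].
    - rewrite !Rminus_eq_0, Rabs_R0. lra.
    - destruct (mvt' psi (fun c => f c (psi c)) a b ltac:(lra) (sol_rc _ _ _ Hpsi a ltac:(lra))) as [c [Hc E]].
      { intros t Ht. apply (sol_der _ _ _ Hpsi). lra. }
      rewrite E, Rabs_mult, (Rabs_pos_eq (b - a)) by lra.
      apply Rmult_le_compat_r. lra. rewrite HfPQ. eapply Rle_trans. apply Rabs_triang.
      pose proof (HB1 c (psi c) (HM c ltac:(lra))). pose proof (HT0 c (psi c) ltac:(lra) (HM c ltac:(lra))).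
      lra. }
  destruct Lip as [L [K1 [HL [HK1 Lip]]]].
  assert (Step : forall T, K <= T -> near_phase T s rho -> z - eta <= psi T -> z + eps/2 < psi (T + tau)).
  { intros T HT Hn Hp.
    pose proof (Hplus_shift f f T ltac:(lra) Hplus_f) as Hg'.
    destruct (PR _ Hg' (z - eta)) as [phi [Hphi _]].
    pose proof (order_sol f _ PR Hg' phi (fun x => psi (T + x)) (z - eta) (psi T) Hphi
                  (sol_shift _ _ _ Hpsi T ltac:(lra)) Hp tau ltac:(lra)) as O.
    cbv beta in O.
    pose proof (Trap T HT Hn phi Hphi). lra. }
  assert (Iter : forall k T, K <= T -> near_phase T s rho -> z - eta <= psi T ->
            z + eps/2 < psi (T + INR (S k) * tau)).
  { induction k as [|k IH]; intros T HT Hn Hp.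
    - simpl. rewrite Rmult_1_l. apply Step; auto.
    - pose proof (IH T HT Hn Hp) as H1.
      pose proof (pos_INR (S k)).
      assert (HKk : K <= T + INR (S k) * tau) by nra.
      pose proof (Step (T + INR (S k) * tau) HKk (near_shift T s rho (S k) Hn) ltac:(lra)) as H2.
      replace (T + INR (S (S k)) * tau) with (T + INR (S k) * tau + tau) by (rewrite (S_INR (S k)); ring).
      exact H2. }
  set (rho2 := Rmin rho (eps / (8 * (L + 1)))).
  assert (Hr2 : 0 < rho2) by (apply Rmin_glb_lt; auto; apply Rdiv_lt_0_compat; lra).
  assert (Hr2a : rho2 <= rho) by apply Rmin_l.
  assert (Hr2b : L * (2 * rho2) <= eps / 4).
  { assert (rho2 <= eps / (8 * (L + 1))) by apply Rmin_r.
    assert (E : eps / (8 * (L + 1)) * (8 * (L + 1)) = eps) by (field; lra). nra. }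
  destruct (U_ne _ U _ (U_and _ U _ _ (U_and3 U _ _ _ (HK (Rmax K K1)) (Hs rho2 Hr2) (Hz eta Heta)) (HK 0)))
    as [t' [[Ht1 [Ht2 Ht3]] Ht4]].
  pose proof (Rmax_l K K1). pose proof (Rmax_r K K1).
  assert (Nt' : near_phase t' s rho) by (apply phase_near; lra).
  assert (Pt' : z - eta <= psi t') by (apply Rabs_def2 in Ht3; lra).
  apply (U_contra U _ (U_and3 U _ _ _ (HK (t' + 2 * tau)) (Hs rho2 Hr2) (Hz (eps/4) ltac:(lra)))).
  intros t [Hta [Htb Htc]]. cbv beta in *.
  set (k := (Int_part (t / tau) - Int_part (t' / tau))%Z).
  assert (Ek : t - t' = phase t - phase t' + IZR k * tau).
  { unfold k, phase. rewrite minus_IZR. ring. }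
  pose proof (phase_bd t). pose proof (phase_bd t').
  assert (Hk : (1 < k)%Z).
  { apply lt_IZR. apply (Rmult_lt_reg_r tau); auto. clearbody k. destruct H1, H2. assert (IZR k * tau = t - t' - (phase t - phase t')) by lra. lra. }
  set (j := Z.to_nat (k - 1)).
  assert (Ej : INR (S j) = IZR k).
  { rewrite S_INR. unfold j. rewrite INR_IZR_INZ, Z2Nat.id by lia. rewrite minus_IZR. ring. }
  pose proof (Iter j t' ltac:(lra) Nt' Pt') as It. rewrite Ej in It.
  set (T2 := t' + IZR k * tau) in *.
  assert (Hd : Rabs (t - T2) <= 2 * rho2).
  { replace (t - T2) with ((phase t - s) - (phase t' - s)) by (unfold T2; lra).
    eapply Rle_trans. apply Rabs_triang. rewrite Rabs_Ropp. lra. }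
  assert (IZR k * tau > 0) by lra.
  assert (Hl : Rabs (psi t - psi T2) <= L * (2 * rho2)).
  { destruct (Rle_dec T2 t).
    - eapply Rle_trans. apply Lip. unfold T2 in *; lra. apply Rmult_le_compat_l; auto.
      rewrite Rabs_pos_eq in Hd; lra.
    - rewrite Rabs_sym. eapply Rle_trans. apply Lip. unfold T2 in *; lra.
      apply Rmult_le_compat_l; auto. rewrite Rabs_left in Hd; lra. }
  apply Rabs_def2 in Htc. apply Rabs_le_between in Hl. lra.
Qed.

End Main.

Definition negf (g : R -> R -> R) := fun t x => - g t (- x).

Lemma cont2_neg g : cont2 g -> cont2 (negf g).
Proof.
  intros Hg. apply cont2_mk. intros t x e He. unfold negf.
  destruct (cont2_ed g Hg t (-x) e He) as [d [Hd H]]. exists d. split; auto.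
  intros t' x' H1 H2. replace (- g t' (- x') - - g t (- x)) with (- (g t' (- x') - g t (- x))) by ring.
  rewrite Rabs_Ropp. apply H; auto. replace (- x' - - x) with (- (x' - x)) by ring. rewrite Rabs_Ropp. exact H2.
Qed.

Lemma sol_on_neg g g2 v T u : (forall t x, g2 t x = - g t (- x)) -> solution_on g v T u ->
  solution_on g2 (- v) T (fun t => - u t).
Proof.
  intros Eg [H0 [Hrc Hd]]. split; [|split].
  - simpl. rewrite H0. reflexivity.
  - apply (rc_to (fun t => - u t)). intros e He. destruct (rc_of u 0 Hrc e He) as [d [Hd0 H]].
    exists d. split; auto. intros t Ht. replace (- u t - - u 0) with (- (u t - u 0)) by ring.
    rewrite Rabs_Ropp. apply H; auto.
  - intros t Ht. rewrite Eg, Ropp_involutive. apply (is_derive_opp u t). apply Hd. exact Ht.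
Qed.

Lemma solR_neg g g2 v u : (forall t x, g2 t x = - g t (- x)) -> solution_Rplus g v u ->
  solution_Rplus g2 (- v) (fun t => - u t).
Proof. intros Eg H T HT. apply (sol_on_neg g); auto. Qed.

Lemma Hplus_neg f g : in_Hplus (negf f) g -> in_Hplus f (negf g).
Proof.
  intros [Hc Ha]. split. apply cont2_neg; auto.
  intros r eps He. destruct (Ha r eps He) as [h [Hh H]]. exists h. split; auto.
  intros t x Ht Hx. specialize (H t (- x) Ht ltac:(rewrite Rabs_Ropp; exact Hx)).
  unfold negf in *. rewrite Ropp_involutive in H.
  replace (f (t + h) x - - g t (- x)) with (- (- f (t + h) x - g t (- x))) by ring.
  rewrite Rabs_Ropp. exact H.
Qed.

Lemma PR_neg f : positively_regular f -> positively_regular (negf f).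
Proof.
  intros PR g Hg v. destruct (PR (negf g) (Hplus_neg f g Hg) (- v)) as [phi [Hphi Hu]].
  exists (fun t => - phi t). split.
  - pose proof (solR_neg (negf g) g (- v) phi) as S. rewrite Ropp_involutive in S. apply S; auto.
    intros t x. unfold negf. rewrite !Ropp_involutive. reflexivity.
  - intros T psi HT Hpsi t Ht.
    pose proof (sol_on_neg g (negf g) v T psi (fun t x => eq_refl) Hpsi) as S.
    rewrite <- (Hu T (fun t => - psi t) HT S t Ht). ring.
Qed.

Lemma AP_neg tau f : asymp_periodic tau f -> asymp_periodic tau (negf f).
Proof.
  intros [P [Q [HP [HQ [HfPQ [Hper HQl]]]]]]. exists (negf P), (negf Q).
  split. apply cont2_neg; auto. split. apply cont2_neg; auto. split.
  - intros t x. unfold negf. rewrite HfPQ. ring.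
  - split. intros t x. unfold negf. rewrite Hper. reflexivity.
    intros r eps He. destruct (HQl r eps He) as [T0 H]. exists T0. intros t x Ht Hx.
    unfold negf. rewrite Rabs_Ropp. apply H; auto. rewrite Rabs_Ropp; auto.
Qed.

Lemma one_sided' tau f u0 phi : 0 < tau -> cont2 f -> asymp_periodic tau f -> positively_regular f ->
  solution_Rplus f u0 phi -> (exists M, forall t, 0 <= t -> Rabs (phi t) <= M) ->
  forall eps, 0 < eps -> exists K, forall t, K <= t -> phi (t + tau) - phi t < eps.
Proof.
  intros Htau Hf [P [Q [HP [HQ [HfPQ [Hper HQl]]]]]] PR Hphi [M HM].
  exact (one_sided tau f P Q Htau Hf HP HfPQ Hper HQl PR phi u0 M Hphi HM).
Qed.

Theorem theorem1p2 (tau : R) (f : R -> R -> R) (u0 : R) (phi : R -> R) :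
  0 < tau ->
  cont2 f ->
  asymp_periodic tau f ->
  positively_regular f ->
  solution_Rplus f u0 phi ->
  (exists M, forall t, 0 <= t -> Rabs (phi t) <= M) ->
  is_lim (fun t => Rabs (phi (t + tau) - phi t)) p_infty 0.
Proof.
  intros Htau Hf HAP PR Hphi [M HM].
  apply is_lim_spec. intros [e He]. simpl.
  destruct (one_sided' tau f u0 phi Htau Hf HAP PR Hphi (ex_intro _ M HM) e He) as [K1 H1].
  destruct (one_sided' tau (negf f) (- u0) (fun t => - phi t) Htau (cont2_neg f Hf) (AP_neg tau f HAP)
     (PR_neg f PR) (solR_neg f (negf f) u0 phi (fun t x => eq_refl) Hphi)) with (eps := e) as [K2 H2]; auto.
  { exists M. intros t Ht. rewrite Rabs_Ropp. auto. }
  exists (Rmax K1 K2). intros t Ht. pose proof (Rmax_l K1 K2). pose proof (Rmax_r K1 K2).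
  specialize (H1 t ltac:(lra)). specialize (H2 t ltac:(lra)). simpl in H2.
  rewrite Rminus_0_r, Rabs_Rabsolu. apply Rabs_def1; lra.
Qed.
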